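(* Let $G$ be a connected graph with node set $V(G)$, let $N_v$ denote the set of neighbors of $v$, and let $A_1\neq\emptyset$ be the set of initially awake nodes. Define $A_0=\emptyset$ and, for $i\ge 1$, $S_i=\left(\bigcup_{v\in A_i}N_v\right)\cap\left(V(G)\setminus(A_i\cup A_{i-1})\right)$ and $A_{i+1}=S_i$. For $i\ge1$, let $v_1^{(i)},\dots,v_{|A_i|}^{(i)}$ be the elements of $A_i$ in increasing order of ID and define $S_{v_j^{(i)}}^{(i)}=N_{v_j^{(i)}}\cap\left(S_i\setminus\bigcup_{k\in[j-1]}S_{v_k^{(i)}}^{(i)}\right)$. Then for every node $v$: (1) $v$ is an actor of at most one epoch, that is, there is a unique $i$ with $v\in A_i$; and (2) $S_v^{(i)}\cap S_w^{(j)}=\emptyset$ for every node $w\neq v$, where $i$ and $j$ are the unique indices with $v\in A_i$ and $w\in A_j$.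
   Context: Nodes have unique IDs from $[n]$. The nodes of $A_i$ are called the actors of epoch $i$. *)

(* Defs.v *)
(* Nodes are 'I_n (IDs from [n], ordered by value). *)
From mathcomp Require Import all_boot.
Set Implicit Arguments. Unset Strict Implicit. Unset Printing Implicit Defensive.

Section Epochs.
Variables (n : nat) (e : rel 'I_n) (A1 : {set 'I_n}).

Definition nbhd (v : 'I_n) : {set 'I_n} := [set u | e v u].

Definition next_set (A Aprev : {set 'I_n}) : {set 'I_n} :=
  (\bigcup_(v in A) nbhd v) :&: ~: (A :|: Aprev).

(* epoch_pair i = (A_i, A_{i+1}), with A_0 = set0 *)
Fixpoint epoch_pair (i : nat) : {set 'I_n} * {set 'I_n} :=
  match i with
  | 0 => (set0, A1)
  | i'.+1 => let: (Ap, Ac) := epoch_pair i' in (Ac, next_set Ac Ap)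
  end.

Definition actors (i : nat) : {set 'I_n} := (epoch_pair i).1.

Definition S_epoch (i : nat) : {set 'I_n} := next_set (actors i) (actors i.-1).

(* Given S and the actors v_1 < ... < v_m, the list of the sets
   S_{v_j} = N_{v_j} \cap (S \ U_{k<j} S_{v_k}); [covered] is U_{k<j} S_{v_k}. *)
Fixpoint S_list (S : {set 'I_n}) (s : seq 'I_n) (covered : {set 'I_n})
  : seq {set 'I_n} :=
  match s with
  | [::] => [::]
  | v :: s' => let Sv := nbhd v :&: (S :\: covered) in
               Sv :: S_list S s' (covered :|: Sv)
  end.

Definition sorted_actors (i : nat) : seq 'I_n :=
  sort (fun x y : 'I_n => x <= y) (enum (actors i)).

Definition S_node (i : nat) (v : 'I_n) : {set 'I_n} :=
  nth set0 (S_list (S_epoch i) (sorted_actors i) set0)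
      (index v (sorted_actors i)).

End Epochs.

(* Main.v *)
Require Import Defs.
From mathcomp Require Import all_boot.
From mathcomp Require Import zify.
Set Implicit Arguments. Unset Strict Implicit.

Section H.
Variables (n : nat) (e : rel 'I_n) (A1 : {set 'I_n}).
Local Notation A := (actors e A1).

Lemma actorsSS k : A k.+2 = next_set e (A k.+1) (A k).
Proof. rewrite /actors /=; by case: (epoch_pair e A1 k). Qed.

Lemma actors0 : A 0 = set0. Proof. by []. Qed.

Lemma nbrA k x y : x \in A k.+1 -> e x y ->
  [|| y \in A k, y \in A k.+1 | y \in A k.+2].
Proof.
move=> xA exy; rewrite actorsSS /next_set !inE.
have -> : y \in \bigcup_(v in A k.+1) nbhd e v.
  by apply/bigcupP; exists x => //; rewrite inE.
by case: (y \in A k); case: (y \in A k.+1).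
Qed.

Lemma disjA (se : symmetric e) i : forall k x, k < i -> x \in A i -> x \in A k -> False.
Proof.
elim: i {-2}i (leqnn i) => [|N IH] i Hi k x.
  by move: Hi; rewrite leqn0 => /eqP ->.
case: i Hi => [|[|m]] Hi //.
  by case: k => // _ _; rewrite actors0 inE.
move=> Hk; rewrite actorsSS /next_set !inE => /andP [/bigcupP [y yA]].
rewrite inE => eyx /norP [xn1 xn0] xk.
have : k < m.
  rewrite ltnNge; apply/negP => Hmk.
  have: (k == m) || (k == m.+1) by move: Hk Hmk; case: ltngtP => //; lia.
  by case/orP => /eqP E; subst; rewrite xk in xn0 xn1.
case: k xk {Hk} => [|k] xk Hkm; first by rewrite actors0 inE in xk.
rewrite se in eyx.
have := nbrA xk eyx.
case/or3P => yk; apply: (IH m.+1 _ _ y _ yA yk); lia.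
Qed.

Lemma S_list_sub S s cov k x : x \in nth set0 (S_list e S s cov) k -> x \in S.
Proof.
elim: s cov k => [|v s IH] cov [|k] /=; rewrite ?nth_nil ?inE //.
  by case/andP => _ /andP [].
by move/IH.
Qed.

Lemma S_list_cov S s cov k x : x \in nth set0 (S_list e S s cov) k -> x \notin cov.
Proof.
elim: s cov k => [|v s IH] cov [|k] /=; rewrite ?nth_nil ?inE //.
  by case/andP => _ /andP [].
by move/IH; rewrite inE negb_or => /andP [].
Qed.

Lemma S_list_disj S s cov i j x : i != j ->
  x \in nth set0 (S_list e S s cov) i -> x \in nth set0 (S_list e S s cov) j -> False.
Proof.
elim: s cov i j => [|v s IH] cov [|i] [|j] //= Hij; rewrite ?nth_nil ?in_set0 //.
- by move=> H1 /S_list_cov; rewrite in_setU H1 orbT.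
- by move=> /S_list_cov; rewrite in_setU => /norP [_ /negP].
- by apply: IH.
Qed.

End H.

Theorem lemma3 (n : nat) (e : rel 'I_n) (A1 : {set 'I_n}) :
  symmetric e -> irreflexive e -> (forall x y : 'I_n, connect e x y) ->
  A1 != set0 ->
  forall v : 'I_n,
    (exists! i : nat, v \in actors e A1 i) /\
    (forall (w : 'I_n) (i j : nat), w != v ->
       v \in actors e A1 i -> w \in actors e A1 j ->
       S_node e A1 i v :&: S_node e A1 j w = set0).
Proof.
move=> se ie conn /set0Pn [a aA] v.
have uniq_i : forall x i j, x \in actors e A1 i -> x \in actors e A1 j -> i = j.
  move=> x i j xi xj; case: (ltngtP i j) => // H.
    by case: (disjA se H xj xi).
  by case: (disjA se H xi xj).
split.
  have [i vi] : exists i, v \in actors e A1 i.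
    have := conn a v; case/connectP => p pth ->.
    elim: p a {aA} (ex_intro (fun i => a \in actors e A1 i) 1 aA) pth
      => [|b p IHp] a' [i ai] /=; first by exists i.
    case/andP => eab pth; apply: IHp pth.
    case: i ai => [|k] ai; first by rewrite actors0 inE in ai.
    by case/or3P: (nbrA ai eab) => H; eexists; exact H.
  by exists i; split => // j; apply: uniq_i.
move=> w i j wv vi wj; apply/setP => x; rewrite !inE.
apply/negbTE/negP => /andP [xv xw].
have subS : forall k u, x \in S_node e A1 k u -> x \in actors e A1 k.+1.
  move=> k u; rewrite /S_node => /S_list_sub.
  case: k => [|k]; first by rewrite /S_epoch /= /next_set !inE => /andP [/bigcupP [? ]]; rewrite inE.
  idtac.
  by rewrite /S_epoch /= -actorsSS.
have Eij : i = j.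
  have := uniq_i _ _ _ (subS _ _ xv) (subS _ _ xw); by case.
subst j.
have memv : v \in sorted_actors e A1 i by rewrite /sorted_actors mem_sort mem_enum.
have memw : w \in sorted_actors e A1 i by rewrite /sorted_actors mem_sort mem_enum.
apply: (S_list_disj (i:=index v (sorted_actors e A1 i)) (j:=index w (sorted_actors e A1 i))) xv xw.
apply/eqP => E.
have := nth_index v memv; rewrite E nth_index // => Ewv.
by rewrite Ewv eqxx in wv.
Qed.
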